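(* The inclusion $\mathrm{PF}(\Pi)\subseteq\mathrm{CDUS}(\Pi)$ does not hold in general: there exists a (finite) family of policies $\Pi$ such that $\mathrm{PF}(\Pi)\not\subseteq\mathrm{CDUS}(\Pi)$.
   Context: A family of policies $\Pi=\{\pi_1,\pi_2,\dots\}$ of a multi-objective decision problem with $d$ objectives is given, each $\pi$ having a random return vector $\mathbf{Z}^\pi\in\mathbb{R}^d$ with finite mean $\mathbf{V}^\pi=\mathbb{E}[\mathbf{Z}^\pi]$; the return distributions of the policies may be arbitrary (e.g. finitely supported). For $\mathbf{x},\mathbf{y}\in\mathbb{R}^d$: $\mathbf{y}\preceq_p\mathbf{x}$ iff $y_i\le x_i$ for all $i$; $\mathbf{x}\succ_p\mathbf{y}$ iff $x_i\ge y_i$ for all $i$ and $x_i>y_i$ for some $i$. CDF: $F_{\mathbf{X}}(\mathbf{x})=P(\mathbf{X}\preceq_p\mathbf{x})$; $\mathbf{X}\succeq_{\mathrm{FSD}}\mathbf{Y}$ iff $F_{\mathbf{X}}\le F_{\mathbf{Y}}$ pointwise, $\succ_{\mathrm{FSD}}$ additionally requiring strict inequality somewhere; $\mathbf{X}\succ_d\mathbf{Y}$ iff $\mathbf{X}\succeq_{\mathrm{FSD}}\mathbf{Y}$ and $X_j\succ_{\mathrm{FSD}}Y_j$ for some marginal $j$. For weights $\lambda\in\Delta^{|\Pi|}$ (probability vectors), $\sum_i\lambda_i\mathbf{Z}^{\pi_i}$ is the mixture distribution with CDF $\sum_i\lambda_iF_{\mathbf{Z}^{\pi_i}}$. $\mathrm{PF}(\Pi)=\{\pi\in\Pi:\nexists\pi'\in\Pi,\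 \mathbf{V}^{\pi'}\succ_p\mathbf{V}^\pi\}$; $\mathrm{CDUS}(\Pi)=\{\pi\in\Pi:\nexists\lambda\in\Delta^{|\Pi|},\ \sum_i\lambda_i\mathbf{Z}^{\pi_i}\succ_d\mathbf{Z}^\pi\}$. *)

(* Defs.v *)
From HB Require Import structures.
From mathcomp Require Import all_boot all_order all_algebra.
From mathcomp Require Import reals.
Set Implicit Arguments. Unset Strict Implicit. Unset Printing Implicit Defensive.
Import Order.TTheory GRing.Theory Num.Theory.
Local Open Scope ring_scope.

Section Defs.
Variable R : realType.
Variable d : nat.

(* A finitely supported distribution on R^d: a list of (weight, atom) pairs. *)
Definition fdist := seq (R * 'rV[R]_d).

Definition valid_fdist (Z : fdist) : Prop :=
  (forall p, p \in Z -> 0 <= p.1) /\ \sum_(p <- Z) p.1 = 1.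

Definition lep (y x : 'rV[R]_d) : bool := [forall i, y 0 i <= x 0 i].

Definition gtp (x y : 'rV[R]_d) : bool :=
  [forall i, y 0 i <= x 0 i] && [exists i, y 0 i < x 0 i].

Definition mean (Z : fdist) : 'rV[R]_d := \sum_(p <- Z) p.1 *: p.2.

Definition cdf (Z : fdist) (x : 'rV[R]_d) : R :=
  \sum_(p <- Z) p.1 * (lep p.2 x)%:R.

Definition mcdf (Z : fdist) (j : 'I_d) (t : R) : R :=
  \sum_(p <- Z) p.1 * ((p.2 0 j <= t)%R : bool)%:R.

Definition fsd_ge (X Y : fdist) : Prop := forall x, cdf X x <= cdf Y x.
Definition fsd_gt (X Y : fdist) : Prop :=
  fsd_ge X Y /\ exists x, cdf X x < cdf Y x.

Definition mfsd_gt (X Y : fdist) (j : 'I_d) : Prop :=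
  (forall t, mcdf X j t <= mcdf Y j t) /\ exists t, mcdf X j t < mcdf Y j t.

Definition ddom (X Y : fdist) : Prop := fsd_ge X Y /\ exists j, mfsd_gt X Y j.

Definition mixture n (lam : 'I_n -> R) (Pi : 'I_n -> fdist) : fdist :=
  flatten [seq [seq (lam i * p.1, p.2) | p <- Pi i] | i <- enum 'I_n].

Definition in_simplex n (lam : 'I_n -> R) : Prop :=
  (forall i, 0 <= lam i) /\ \sum_i lam i = 1.

Definition in_PF n (Pi : 'I_n -> fdist) (i : 'I_n) : Prop :=
  ~ exists i', gtp (mean (Pi i')) (mean (Pi i)).

Definition in_CDUS n (Pi : 'I_n -> fdist) (i : 'I_n) : Prop :=
  ~ exists lam, in_simplex lam /\ ddom (mixture lam Pi) (Pi i).

End Defs.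

(* Main.v *)
Require Import Defs.
From HB Require Import structures.
From mathcomp Require Import all_boot all_order all_algebra.
From mathcomp Require Import reals.
From mathcomp Require Import lra.
Import Order.TTheory GRing.Theory Num.Theory.
Local Open Scope ring_scope.

Section S.
Variable R : realType.
Definition vec (a b : R) : 'rV[R]_2 := \row_(j < 2) [:: a; b]`_j.
Lemma vec0 a b : vec a b 0 0 = a. Proof. by rewrite mxE. Qed.
Lemma vec1 a b : vec a b 0 1 = b. Proof. by rewrite mxE. Qed.

Lemma lep2 (v x : 'rV[R]_2) : lep v x = (v 0 0 <= x 0 0) && (v 0 1 <= x 0 1).
Proof.
apply/forallP/andP => [H|[H0 H1] i]; first by split; apply: H.
have [->|->] : i = 0 \/ i = 1; [|done|done].
  case: i => [[|[|//]] Hi]; [left|right]; exact/val_inj.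
Qed.

Definition Pi3 (i : 'I_3) : fdist R 2 :=
  match val i with
  | 0 => [:: (1, vec 0 1)]
  | 1 => [:: (1, vec 2 0)]
  | _ => [:: (1/2, vec 0 0); (1/2, vec 1 1)]
  end.

Lemma sum_flat n (f : 'I_n -> fdist R 2) (g : R * 'rV[R]_2 -> R) :
  \sum_(p <- flatten [seq f i | i <- enum 'I_n]) g p = \sum_i \sum_(p <- f i) g p.
Proof. by rewrite big_flatten big_map big_enum. Qed.

End S.
Section M.
Variable R : realType.
Lemma meanE (Z : fdist R 2) j : mean Z 0 j = \sum_(p <- Z) p.1 * p.2 0 j.
Proof.
rewrite /mean; elim: Z => [|p Z IH]; first by rewrite !big_nil mxE.
by rewrite !big_cons mxE IH mxE.
Qed.

Lemma gtp2 (u v : 'rV[R]_2) : gtp u v -> v 0 0 <= u 0 0 /\ v 0 1 <= u 0 1 /\ (v 0 0 < u 0 0 \/ v 0 1 < u 0 1).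
Proof.
case/andP => /forallP H /existsP [i Hi]; split; [exact: H|split; [exact: H|]].
have [E|E] : i = 0 \/ i = 1.
  case: i Hi => [[|[|//]] Hi] _; [left|right]; exact/val_inj.
by left; rewrite -E.
by right; rewrite -E.
Qed.

End M.

Theorem mainTheorem13 (R : realType) :
  exists (d n : nat) (Pi : 'I_n -> fdist R d),
    (forall i, valid_fdist (Pi i)) /\
    exists i : 'I_n, in_PF Pi i /\ ~ in_CDUS Pi i.
Proof.
exists 2%N, 3%N, (Pi3 R); split.
  case=> [[|[|[|//]]] Hi]; rewrite /valid_fdist /Pi3 /=; split;
    rewrite ?big_cons ?big_nil /=; try lra;
    apply/allP; rewrite /= ?andbT; try apply/andP; try split; lra.
exists (@Ordinal 3 2 isT); split.
  case=> i' /(@gtp2 R); rewrite !meanE.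
  case: i' => [[|[|[|//]]] Hi]; rewrite /Pi3 /= !big_cons !big_nil /= ?vec0 ?vec1; lra.
move=> H; apply: H.
exists (fun i : 'I_3 => if val i == 2%N then 0 else 1/2).
split.
  split; first by move=> i; case: ifP => _; lra.
  by rewrite !big_ord_recr big_ord0 /=; lra.
split.
  move=> x; rewrite /cdf /mixture sum_flat.
  rewrite !big_ord_recr big_ord0 /= /Pi3 /= !big_cons !big_nil /= !lep2 ?vec0 ?vec1.
  have [h1|h1] := lerP 0 (x 0 0); have [h2|h2] := lerP 1 (x 0 0);
  have [h3|h3] := lerP 2 (x 0 0); have [h4|h4] := lerP 0 (x 0 1);
  have [h5|h5] := lerP 1 (x 0 1); rewrite /= ?mulr1 ?mulr0; lra.
exists 0; split.
  move=> t; rewrite /mcdf /mixture sum_flat.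
  rewrite !big_ord_recr big_ord0 /= /Pi3 /= !big_cons !big_nil /= ?vec0 ?vec1.
  have [h1|h1] := lerP 0 t; have [h2|h2] := lerP 1 t;
  have [h3|h3] := lerP 2 t; rewrite /= ?mulr1 ?mulr0; lra.
exists 1; rewrite /mcdf /mixture sum_flat.
rewrite !big_ord_recr big_ord0 /= /Pi3 /= !big_cons !big_nil /= ?vec0 ?vec1.
rewrite ler01 lexx; have -> : (2 <= 1 :> R) = false by apply/negbTE; rewrite -ltNge; lra.
rewrite /= ?mulr1 ?mulr0; lra.
Qed.
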